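(* Let $p$ be a prime and $n\ge 1$. Among all finite abelian groups that contain a subgroup isomorphic to each abelian group of order $p^n$, there is a unique one of smallest order up to isomorphism, and its order is $p^{f(n)}$, where $f(n)=\sum_{k=1}^n\lfloor n/k\rfloor$. Explicitly, it is $\mathbb{Z}_{p^{\lfloor n/1\rfloor}}\times\mathbb{Z}_{p^{\lfloor n/2\rfloor}}\times\cdots\times\mathbb{Z}_{p^{\lfloor n/n\rfloor}}$. *)

(* Defs.v *)
From HB Require Import structures.
From mathcomp Require Import all_boot all_order all_algebra all_fingroup.
Set Implicit Arguments. Unset Strict Implicit. Unset Printing Implicit Defensive.
Import GRing.Theory.

Definition f (n : nat) : nat := \sum_(1 <= k < n.+1) n %/ k.

Definition amb (p n : nat) : finGroupType := 'rV['Z_(p ^ n)]_n.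

(* The group Z_{p^{n/1}} x Z_{p^{n/2}} x ... x Z_{p^{n/n}}, realised inside
   (Z/p^nZ)^n: the k-th coordinate (k = 1..n, index k-1) ranges over the
   cyclic subgroup p^(n - n/k) Z / p^n Z, which has order p^(n/k). *)
Definition Uset (p n : nat) : {set amb p n} :=
  [set v : amb p n | [forall k : 'I_n, p ^ (n - n %/ k.+1) %| v ord0 k]].

Definition universal (p n : nat) (gT : finGroupType) (G : {set gT}) : Prop :=
  forall (hT : finGroupType) (H : {group hT}), abelian H -> #|H| = (p ^ n)%N ->
    exists K : {group gT}, K \subset G /\ (K \isog H).

(* Main.v *)
Require Import Defs.
From mathcomp Require Import all_boot all_order all_algebra all_fingroup all_solvable.
From mathcomp Require Import zify.
Set Implicit Arguments. Unset Strict Implicit. Unset Printing Implicit Defensive.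

Section Gen.
Local Open Scope group_scope.
Variable p : nat.
Hypothesis pr_p : prime p.

Definition eO (gT : finGroupType) j (G : {group gT}) := logn p #|'Ohm_j(G)|.
Definition dO (gT : finGroupType) j (G : {group gT}) := logn p #|'Ohm_j.+1(G) : 'Ohm_j(G)|.

Lemma eO_mono gT j (G : {group gT}) : eO j G <= eO j.+1 G.
Proof. by rewrite /eO dvdn_leq_log ?cardG_gt0 ?cardSg ?Ohm_leq. Qed.

Lemma dOE gT j (G : {group gT}) : dO j G = eO j.+1 G - eO j G.
Proof. by rewrite /dO -divgS ?Ohm_leq // logn_div ?cardSg ?Ohm_leq. Qed.

Lemma dO_sum gT (G : {group gT}) m : eO m G = \sum_(j < m) dO j G.
Proof.
elim: m => [|m IH]; first by rewrite big_ord0 /eO Ohm0 cards1 logn1.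
by rewrite big_ord_recr /= -IH dOE subnKC // eO_mono.
Qed.

Lemma dO_mono gT (K P : {group gT}) j :
  p.-group P -> abelian P -> K \subset P -> dO j K <= dO j P.
Proof.
move=> pP cP sKP; have pK := pgroupS sKP pP; have cK := abelianS sKP cP.
have OE (X : {group gT}) i : p.-group X -> abelian X -> 'Ohm_i(X) = 'Ldiv_(p ^ i)(X).
  by move=> pX cX; rewrite (OhmEabelian pX) // (abelianS (Ohm_sub _ _) cX).
set A := 'Ohm_j.+1(K); set B := 'Ohm_j(P); set C := 'Ohm_j.+1(P).
have AB : A :&: B = 'Ohm_j(K).
  rewrite /A /B !OE //; apply/setP => x; rewrite !inE.
  case Kx: (x \in K) => //=; rewrite (subsetP sKP x Kx) /=.
  case: (eqVneq (x ^+ (p ^ j)) 1) => [e|]; last by rewrite andbF.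
  by rewrite expnSr expgM e expg1n eqxx.
have hm := mul_cardG A B; rewrite AB in hm.
have sABC : #|A * B| <= #|C|.
  by rewrite subset_leq_card // mulG_subG OhmS //= Ohm_leq.
rewrite !dOE /eO.
have pg (X : {group gT}) : X \subset P -> #|X| = (p ^ logn p #|X|)%N.
  by move=> sXP; apply: card_pgroup; apply: pgroupS sXP pP.
have sAP : A \subset P by rewrite (subset_trans (Ohm_sub _ _)).
have sBP : B \subset P by rewrite Ohm_sub.
have sCP : C \subset P by rewrite Ohm_sub.
have sDP : 'Ohm_j(K) \subset P by rewrite (subset_trans (Ohm_sub _ _)).
have : (p ^ (logn p #|A| + logn p #|B|) <= p ^ (logn p #|C| + logn p #|'Ohm_j(K)|))%N.
  rewrite !expnD -(pg A) // -(pg B) // -(pg C) // -(pg _ sDP) hm.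
  by rewrite leq_mul2r sABC orbT.
rewrite leq_exp2l ?prime_gt1 //.
have h1 := eO_mono j K; have h2 := eO_mono j P; rewrite /eO in h1 h2.
rewrite -/A -/B -/C in h1 h2 *. lia.
Qed.

Lemma dO_isog gT hT (G : {group gT}) (H : {group hT}) j :
  G \isog H -> dO j G = dO j H.
Proof.
move=> iso; rewrite !dOE /eO.
by rewrite (card_isog (isog_Ohm j.+1 iso)) (card_isog (isog_Ohm j iso)).
Qed.

Lemma dO_type gT (G : {group gT}) j : abelian G ->
  dO j G = count (fun m => j < logn p m) (abelian_type G).
Proof.
move=> cG; have [b defG <-] := abelian_structure cG.
by rewrite count_map /dO -(count_logn_dprod_cycle p j defG).
Qed.

Definition ppow m := (m == (p ^ logn p m)%N) && (0 < logn p m).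

Lemma type_ppow gT (G : {group gT}) : p.-group G -> abelian G ->
  all ppow (abelian_type G).
Proof.
move=> pG cG; have [b defG def_t] := abelian_structure cG.
apply/allP => m mt; have gt1 := allP (abelian_type_gt1 G) m mt.
move: mt gt1; rewrite -def_t => /mapP [x xb ->].
have Gx : x \in G.
  rewrite -(bigdprodWY defG); case/splitPr: xb => bl br.
  by rewrite mem_gen // big_cat big_cons !inE cycle_id orbT.
have px := mem_p_elt pG Gx.
have e : #[x] = (p ^ logn p #[x])%N by rewrite -p_part part_pnat_id.
rewrite /ppow /= e pfactorK // eqxx /=.
by case: (logn p #[x]) => //; rewrite expn0.
Qed.

Lemma count_split (f : nat -> nat) e (s : seq nat) : 0 < e ->
  count (fun x => e.-1 < f x) s = count (fun x => f x == e) s + count (fun x => e < f x) s.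
Proof.
move=> e0; elim: s => //= x s IH; rewrite IH.
case: (ltngtP (f x) e) => h; lia.
Qed.

Lemma seq_eq (s1 s2 : seq nat) : all ppow s1 -> all ppow s2 ->
  sorted geq s1 -> sorted geq s2 ->
  (forall j, count (fun m => j < logn p m) s1 = count (fun m => j < logn p m) s2) ->
  s1 = s2.
Proof.
move=> a1 a2 o1 o2 hc.
apply: (sorted_eq (leT := geq)) => //.
- by move=> ? ? ? /= ? ?; lia.
- by move=> ? ? /= /andP [? ?]; lia.
have key (s : seq nat) m : all ppow s -> ppow m ->
    count_mem m s = count (fun x => logn p x == logn p m) s.
  move=> sa pm; apply: eq_in_count => x xs /=.
  have /andP [/eqP ex _] := allP sa x xs; move/andP: pm => [/eqP em _].
  apply/eqP/eqP => [-> //|h]; by rewrite ex em h.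
have key0 (s : seq nat) m : all ppow s -> ~~ ppow m -> count_mem m s = 0.
  move=> sa pm; apply/eqP; rewrite -leqn0 leqNgt -has_count; apply/hasP => [[x xs /= /eqP ex]].
  by move: (allP sa x xs); rewrite ex (negbTE pm).
apply/allP => m _; apply/eqP.
case pm: (ppow m); last by rewrite !key0 ?pm.
rewrite !key //; have /andP [_ l0] := pm.
have := count_split (logn p) s1 l0; have := count_split (logn p) s2 l0.
rewrite !hc. lia.
Qed.

Lemma iso_crit gT hT (G : {group gT}) (H : {group hT}) :
  p.-group G -> abelian G -> p.-group H -> abelian H ->
  (forall j, dO j G = dO j H) -> G \isog H.
Proof.
move=> pG cG pH cH hd; rewrite eq_abelian_type_isog //; apply/eqP.
apply: seq_eq; rewrite ?type_ppow ?abelian_type_sorted // => j.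
by rewrite -!dO_type.
Qed.

End Gen.
Section Amb.
Variables p n : nat.
Hypothesis pr_p : prime p.
Hypothesis n_ge1 : (1 <= n)%N.

Lemma M1 : (1 < p ^ n)%N.
Proof. by rewrite -(expn0 p) ltn_exp2l ?prime_gt1. Qed.
Lemma ZM : (Zp_trunc (p ^ n)).+2 = (p ^ n)%N. Proof. exact: Zp_cast M1. Qed.
Lemma val_add (x y : 'Z_(p ^ n)) : nat_of_ord (x + y)%R = ((x + y) %% p ^ n)%N.
Proof. by rewrite /=; congr modn; exact: ZM. Qed.
Lemma val_muln (x : 'Z_(p ^ n)) k : nat_of_ord (x *+ k)%R = ((x * k) %% p ^ n)%N.
Proof. by rewrite Zp_mulrn /=; congr modn; exact: ZM. Qed.
Lemma entM (v w : amb p n) k : ((v * w)%g ord0 k) = (v ord0 k + w ord0 k)%R.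
Proof. by rewrite FinRing.zmodMgE mxE. Qed.
Lemma entX (v : amb p n) k m : ((v ^+ m)%g ord0 k) = (v ord0 k *+ m)%R.
Proof. by rewrite FinRing.zmodXgE mulmxnE. Qed.
Lemma entXv (v : amb p n) k m : nat_of_ord ((v ^+ m)%g ord0 k) = ((v ord0 k * m) %% p ^ n)%N.
Proof. by rewrite entX val_muln. Qed.
Lemma entMv (v w : amb p n) k : nat_of_ord ((v * w)%g ord0 k) = ((v ord0 k + w ord0 k) %% p ^ n)%N.
Proof. by rewrite entM val_add. Qed.
Lemma ent1 k : ((1%g : amb p n) ord0 k) = 0%R.
Proof. by rewrite FinRing.zmod1gE mxE. Qed.

Lemma ent1v k : nat_of_ord ((1%g : amb p n) ord0 k) = 0%N.
Proof. by rewrite ent1. Qed.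
Lemma dvd_mod a x : (a <= n)%N -> (p ^ a %| x %% p ^ n)%N = (p ^ a %| x)%N.
Proof. by move=> h; rewrite /dvdn modn_dvdm // dvdn_exp2l. Qed.

Lemma dvd_min a b x : (p ^ (n - a) %| x) && (p ^ (n - b) %| x) = (p ^ (n - minn a b) %| x).
Proof.
case: (leqP a b) => h.
  apply/andb_idr => d; apply: dvdn_trans d.
  by rewrite dvdn_exp2l // leq_sub2l.
apply/andb_idl => d; apply: dvdn_trans d.
by rewrite dvdn_exp2l // leq_sub2l // ltnW.
Qed.

Definition Sset (l : 'I_n -> nat) : {set amb p n} :=
  [set v : amb p n | [forall k : 'I_n, p ^ (n - l k) %| v ord0 k]].

Lemma S_group l : group_set (Sset l).
Proof.
apply/group_setP; split.
  by rewrite inE; apply/forallP => k; rewrite ent1 dvdn0.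
move=> x y; rewrite !inE => /forallP hx /forallP hy; apply/forallP => k.
by rewrite entM val_add dvd_mod ?leq_subr // dvdn_add.
Qed.

Canonical Sgrp l := Group (S_group l).

Lemma card_mult M d : (d %| M)%N -> (0 < d)%N -> #|[pred x : 'I_M | d %| x]| = (M %/ d)%N.
Proof.
move=> dM d0.
have h (i : 'I_(M %/ d)) : (i * d < M)%N.
  apply: (@leq_trans ((M %/ d) * d)); last by rewrite divnK.
  by rewrite ltn_mul2r d0 ltn_ord.
pose g i := Ordinal (h i).
have -> : #|[pred x : 'I_M | d %| x]| = #|[set g i | i in 'I_(M %/ d)]|.
  apply: eq_card => x; rewrite inE /=; apply/idP/imsetP => [dx|[i _ ->]].
    have hx : (x %/ d < M %/ d)%N by rewrite ltn_divLR // divnK.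
    by exists (Ordinal hx) => //; apply/val_inj; rewrite /= divnK.
  by rewrite /= dvdn_mull.
rewrite card_imset ?card_ord // => i j /(congr1 val) /= /eqP.
by rewrite eqn_pmul2r // => /eqP e; apply/val_inj.
Qed.

Lemma card_S l : (forall k, l k <= n)%N -> #|Sset l| = (p ^ (\sum_k l k))%N.
Proof.
move=> hl.
pose F k := [pred x : 'Z_(p ^ n) | p ^ (n - l k) %| x].
pose phi (f : {ffun 'I_n -> 'Z_(p ^ n)}) : amb p n := (\row_k f k)%R.
have -> : Sset l = phi @: family F.
  apply/setP => v; rewrite inE; apply/forallP/imsetP => [h|[f /familyP hf ->] k].
    exists [ffun k => v ord0 k]; first by apply/familyP => k; rewrite ffunE; apply: h.
    by apply/rowP => k; rewrite mxE ffunE.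
  by rewrite mxE; apply: hf.
rewrite card_imset; last first.
  by move=> f g e; apply/ffunP => k; have := congr1 (fun w : amb p n => w ord0 k) e; rewrite !mxE.
rewrite card_family foldrE big_image expn_sum.
apply: eq_bigr => k _; rewrite /F card_mult ?expn_gt0 ?prime_gt0 //; last first.
  by rewrite ZM dvdn_exp2l ?leq_subr.
rewrite ZM -{1}(subnKC (hl k)) expnD mulnK // expn_gt0 prime_gt0 //.
Qed.

Lemma S_pgroup l : (forall k, l k <= n)%N -> p.-group%g (Sset l).
Proof. by move=> hl; rewrite /pgroup card_S // pnatX pnat_id. Qed.

Lemma S_sub l l' : (forall k, l k <= l' k)%N -> Sset l \subset Sset l'.
Proof.
move=> h; apply/subsetP => v; rewrite !inE => /forallP hv; apply/forallP => k.
by apply: dvdn_trans (hv k); rewrite dvdn_exp2l // leq_sub2l.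
Qed.

Lemma Ohm_S l i : (forall k, l k <= n)%N ->
  'Ohm_i(Sgrp l)%g = Sset (fun k => minn (l k) i).
Proof.
move=> hl; rewrite (OhmEabelian (S_pgroup hl)) ?FinRing.zmod_abelian //.
apply/setP => v; rewrite !inE /=.
have -> : ((v ^+ (p ^ i))%g == 1%g) = [forall k, p ^ (n - i) %| v ord0 k].
  apply/eqP/forallP => [e k|h].
    have := congr1 (fun w : amb p n => nat_of_ord (w ord0 k)) e.
    rewrite entXv ent1v => /eqP; rewrite -/(dvdn _ _).
    case: (leqP i n) => hi; last by rewrite (eqP (_ : n - i == 0)%N) ?expn0 ?dvd1n //; lia.
    by rewrite -{1}(subnKC hi) addnC expnD dvdn_pmul2r ?expn_gt0 ?prime_gt0.
  apply/rowP => k; apply: ord_inj; rewrite entXv ent1v; apply/eqP.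
  rewrite -/(dvdn _ _).
  case: (leqP i n) => hi.
    by rewrite -{1}(subnKC hi) addnC expnD dvdn_pmul2r ?expn_gt0 ?prime_gt0 ?h.
  by apply: dvdn_mull; rewrite dvdn_exp2l //; lia.
apply/andP/forallP => [[/forallP h1 /forallP h2] k|h].
  by rewrite -dvd_min h1 h2.
by split; apply/forallP => k; have := h k; rewrite -dvd_min => /andP [].
Qed.


Lemma eO_S l i : (forall k, l k <= n)%N -> eO p i (Sgrp l) = (\sum_k minn (l k) i)%N.
Proof.
move=> hl; rewrite /eO Ohm_S // card_S ?pfactorK // => k.
exact: leq_trans (geq_minl _ _) (hl k).
Qed.

Lemma dO_S l j : (forall k, l k <= n)%N -> dO p j (Sgrp l) = (\sum_k (j < l k))%N.
Proof.
move=> hl; rewrite dOE !eO_S //.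
have -> : (\sum_k minn (l k) j.+1 = \sum_k minn (l k) j + \sum_k (j < l k))%N.
  by rewrite -big_split; apply: eq_bigr => k _ /=; case: (ltnP j (l k)) => h; lia.
by rewrite addKn.
Qed.

End Amb.
Lemma sum_lt q m : (\sum_(k < m) (k < q) = minn q m)%N.
Proof.
elim: m => [|m IH]; first by rewrite big_ord0 minn0.
rewrite big_ord_recr /= IH; case: (ltnP m q) => h; lia.
Qed.

Lemma sum_nth (a : pred nat) (s : seq nat) m : a 1%N = false -> (size s <= m)%N ->
  (\sum_(k < m) a (nth 1%N s k) = count a s)%N.
Proof.
move=> a1; elim: s m => [|x s IH] m /=.
  by move=> _; rewrite big1 // => k _; rewrite nth_nil a1.
case: m => // m hs; rewrite big_ord_recl /= IH //.
Qed.

Lemma f_eq n : f n = (\sum_(k < n) n %/ k.+1)%N.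
Proof. by rewrite /f big_add1 /= big_mkord. Qed.

Lemma sum_eq_ge m (a b : nat -> nat) : (forall j, j < m -> b j <= a j)%N ->
  (\sum_(j < m) a j = \sum_(j < m) b j)%N -> forall j, (j < m)%N -> a j = b j.
Proof.
move=> hle hs j jm; apply/eqP; rewrite eqn_leq hle // andbT.
move: hs; rewrite (bigD1 (Ordinal jm)) //= [X in _ = X](bigD1 (Ordinal jm)) //= => e.
have : (\sum_(i < m | i != Ordinal jm) b i <= \sum_(i < m | i != Ordinal jm) a i)%N.
  by apply: leq_sum => i _; apply: hle.
set A := (\sum_(i < m | _) a i)%N; set B := (\sum_(i < m | _) b i)%N; move=> h; by rewrite -(leq_add2r A) e leq_add2l.
Qed.

Section Main.
Variables p n : nat.
Hypothesis pr_p : prime p.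
Hypothesis n_ge1 : (1 <= n)%N.

Lemma eO_le gT (G : {group gT}) j : (eO p j G <= logn p #|G|)%N.
Proof. by rewrite /eO dvdn_leq_log ?cardG_gt0 ?cardSg ?Ohm_sub. Qed.

Lemma univ_U : universal p n (Uset p n).
Proof.
move=> hT H cH cardH.
have pH : p.-group%g H by rewrite /pgroup cardH pnatX pnat_id.
have lH : logn p #|H| = n by rewrite cardH pfactorK.
set t := abelian_type H.
have tp : all (ppow p) t := type_ppow pr_p pH cH.
have st : (size t <= n)%N.
  have : count (fun m => 0 < logn p m)%N t = size t.
    by apply/eqP; rewrite -all_count; apply: sub_all tp => m /andP[].
  rewrite -dO_type // => <-.
  have := dO_sum p H 1; rewrite big_ord1 => <-.
  by rewrite -[X in (_ <= X)%N]lH eO_le.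
pose l (k : 'I_n) := logn p (nth 1%N t k).
have hl : forall k : 'I_n, (l k <= n %/ k.+1)%N.
  move=> k; rewrite leq_divRL //.
  case: (ltnP k (size t)) => hk; last by rewrite /l nth_default // logn1.
  have key : forall j, (j < l k)%N -> (k.+1 <= dO p j H)%N.
    move=> j hj; rewrite dO_type //.
    have ai : all (fun m => j < logn p m)%N (take k.+1 t).
      apply/(all_nthP 1%N) => i; rewrite size_take => hi.
      have [hik0 hit] : (i <= k)%N /\ (i < size t)%N by move: hi; case: ifP => [h|/negbT h] hi; lia.
      rewrite nth_take //.
      have hik : (nth 1%N t k <= nth 1%N t i)%N.
        have tr : transitive geq by move=> ? ? ? /= ? ?; lia.
        have rf : reflexive geq by move=> ?; rewrite /= leqnn.
        have := @sorted_leq_nth _ geq tr rf 1%N t (abelian_type_sorted H).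
        by move=> /(_ i k); rewrite !inE; apply.
      have /andP [/eqP ei _] := all_nthP 1%N tp i hit.
      have /andP [/eqP ek _] := all_nthP 1%N tp k hk.
      move: hik; rewrite ei ek leq_exp2l ?prime_gt1 // => hik.
      by rewrite pfactorK //; exact: leq_trans hj hik.
    rewrite -/t -(cat_take_drop k.+1 t) count_cat.
    by move: ai; rewrite all_count => /eqP ->; rewrite size_takel // leq_addr.
  have : (\sum_(j < l k) k.+1 <= \sum_(j < l k) dO p j H)%N.
    by apply: leq_sum => j _; apply: key.
  rewrite -dO_sum sum_nat_const card_ord => h.
  by apply: leq_trans h _; rewrite -[X in (_ <= X)%N]lH eO_le.
have hln : forall k : 'I_n, (l k <= n)%N.
  by move=> k; apply: leq_trans (hl k) (leq_div _ _).
exists (Sgrp pr_p n_ge1 l); split.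
  by apply: S_sub => k; apply: hl.
apply: (iso_crit pr_p) => //; first exact: S_pgroup.
  exact: FinRing.zmod_abelian.
move=> j; rewrite dO_S // dO_type //.
by apply: sum_nth => //=; rewrite logn1.
Qed.

Lemma lowb gT (G : {group gT}) : abelian G -> universal p n G ->
  forall j, (j < n)%N -> (n %/ j.+1 <= dO p j 'O_p(G)%G)%N.
Proof.
move=> cG uG j jn; set q := (n %/ j.+1)%N.
have q1 : (0 < q)%N by rewrite divn_gt0.
have qn : (q * j.+1 <= n)%N by apply: leq_trunc_div.
have qn' : (q <= n)%N by apply: leq_div.
pose l (k : 'I_n) := (j.+1 * (k < q) + (k < 1) * (n - j.+1 * q))%N.
have hl : forall k, (l k <= n)%N.
  move=> k; rewrite /l; have hm : (j.+1 * q <= n)%N by rewrite mulnC.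
  have hm1 : (j.+1 <= j.+1 * q)%N by rewrite leq_pmulr.
  move: hm hm1; set m := (j.+1 * q)%N => hm hm1.
  case: (ltnP k q) => h1; case: (ltnP k 1) => h2 /=; rewrite ?mul1n ?mul0n ?muln1 ?muln0; lia.
have cardT : #|Sgrp pr_p n_ge1 l| = (p ^ n)%N.
  rewrite card_S //; congr expn.
  rewrite big_split /= -big_distrr /= sum_lt.
  rewrite (eq_bigr (fun k : 'I_n => (n - j.+1 * q) * (k < 1))%N); last by move=> k _; rewrite mulnC.
  rewrite -big_distrr /= sum_lt (minn_idPl qn') (minn_idPl n_ge1) muln1.
  have hm : (j.+1 * q <= n)%N by rewrite mulnC.
  move: hm; set m := (j.+1 * q)%N => hm; lia.
have [K [sKG iso]] := uG _ (Sgrp pr_p n_ge1 l) (FinRing.zmod_abelian _) cardT.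
have pK : p.-group%g K by rewrite /pgroup (card_isog iso) cardT pnatX pnat_id.
have sKP : K \subset 'O_p(G)%G by apply: pcore_max pK _; rewrite -sub_abelian_normal.
have := dO_mono pr_p j (pcore_pgroup _ _) (abelianS (pcore_sub _ _) cG) sKP.
rewrite (dO_isog _ _ iso) dO_S //; apply: leq_trans.
rewrite -{1}(minn_idPl qn') -sum_lt; apply: leq_sum => k _.
rewrite /l; case: (ltnP k q) => h //=; lia.
Qed.

Lemma dO_U j : dO p j (Sgrp pr_p n_ge1 (fun k : 'I_n => n %/ k.+1)) =
  (if (j < n)%N then n %/ j.+1 else 0)%N.
Proof.
rewrite dO_S // => [|k]; last exact: leq_div.
case: ifP => jn.
  rewrite -[RHS](minn_idPl (leq_div n j.+1)) -sum_lt; apply: eq_bigr => k _.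
  by congr nat_of_bool; rewrite !leq_divRL // mulnC.
rewrite big1 // => k _; apply/eqP; rewrite eqb0 -leqNgt.
apply: leq_trans (leq_div _ _) _; rewrite leqNgt jn //.
Qed.

End Main.

Unset Implicit Arguments.
Theorem theorem1p5 (p n : nat) (pr_p : prime p) (n_ge1 : (1 <= n)%N) :
  [/\ group_set (Uset p n), abelian (Uset p n), universal p n (Uset p n),
      #|Uset p n| = (p ^ f n)%N &
      forall (gT : finGroupType) (G : {group gT}), abelian G -> universal p n G ->
        (#|Uset p n| <= #|G|)%N /\ (#|G| = #|Uset p n| -> G \isog Uset p n)].
Proof.
pose l0 := fun k : 'I_n => (n %/ k.+1)%N.
have hl0 : forall k, (l0 k <= n)%N by move=> k; exact: leq_div.
have cardU : #|Uset p n| = (p ^ f n)%N.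
  by rewrite f_eq; exact: (card_S pr_p n_ge1 hl0).
split.
- exact: (S_group pr_p n_ge1 l0).
- exact: FinRing.zmod_abelian.
- exact: univ_U.
- exact: cardU.
move=> gT G cG uG; set P := 'O_p(G)%G.
have pP : p.-group%g P := pcore_pgroup p G.
have cP : abelian P := abelianS (pcore_sub _ _) cG.
have hf : (f n <= eO p n P)%N.
  by rewrite dO_sum f_eq; apply: leq_sum => j _; exact: lowb.
have cPe : #|P| = (p ^ logn p #|P|)%N := card_pgroup pP.
have le1 : (p ^ f n <= #|P|)%N.
  by rewrite cPe leq_exp2l ?prime_gt1 // (leq_trans hf (eO_le _ _ _)).
have le2 : (#|P| <= #|G|)%N := subset_leq_card (pcore_sub _ _).
split; first by rewrite cardU (leq_trans le1 le2).
move=> eG; rewrite cardU in eG.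
have ePG : #|P| = #|G| by apply/eqP; rewrite eqn_leq le2 eG le1.
have PG : P :=: G by apply/eqP; rewrite eqEcard pcore_sub ePG leqnn.
have lP : logn p #|P| = f n by rewrite ePG eG pfactorK.
have eOn : eO p n P = f n by apply/eqP; rewrite eqn_leq hf andbT -lP eO_le.
have dlt : forall j, (j < n)%N -> dO p j P = (n %/ j.+1)%N.
  apply: (sum_eq_ge (a := fun j => dO p j P) (b := fun j => n %/ j.+1)%N).
    by move=> j jn; exact: lowb.
  by rewrite -dO_sum -f_eq.
have OnP : 'Ohm_n(P)%G :=: P.
  apply/eqP; rewrite eqEcard Ohm_sub /=.
  have pO : p.-group%g 'Ohm_n(P)%G := pgroupS (Ohm_sub _ _) pP.
  by rewrite (card_pgroup pO) cPe -/(eO p n P) eOn lP.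
have dge : forall j, (n <= j)%N -> dO p j P = 0%N.
  move=> j jn; have e i : (n <= i)%N -> 'Ohm_i(P)%G :=: P.
    by move=> ni; apply/eqP; rewrite eqEsubset Ohm_sub -{1}OnP Ohm_leq.
  by rewrite /dO !e ?(leqW jn) // indexgg logn1.
rewrite -PG; change (P \isog Sgrp pr_p n_ge1 l0).
apply: (iso_crit pr_p) => //; [exact: S_pgroup | exact: FinRing.zmod_abelian |].
move=> j; rewrite dO_U; case: ifP => jn; first exact: dlt.
by apply: dge; rewrite leqNgt jn.
Qed.
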